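(* Let $q_1, q_2$ be real numbers with $0< q_1, q_2 \leq 1$ and let $m,n$ be integers such that $q_1m$ and $q_2n$ are integers. If $H$ is a connected signed bipartite graph, then $$z(m, n, H) \geq \frac{1}{2\max\{q_1, q_2\}}\, z(q_1m, q_2n, H).$$
   Context: A signed bipartite graph is a bipartite graph with a proper vertex 2-colouring by $+$ and $-$. $z(m,n,H)$ is the maximum number of edges in a signed bipartite graph with $+$ class of size $m$ and $-$ class of size $n$ containing no copy of $H$ with $+$ vertices mapped into the $+$ class and $-$ vertices into the $-$ class. *)

(* Defs.v *)
From mathcomp Require Import all_boot all_order all_algebra.
Set Implicit Arguments. Unset Strict Implicit. Unset Printing Implicit Defensive.

(* A signed bipartite graph with + class 'I_a and - class 'I_b is given by
   its edge set EH : {set 'I_a * 'I_b} (edges only go between + and -). *)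

Definition sb_adj (a b : nat) (EH : {set 'I_a * 'I_b}) : rel ('I_a + 'I_b) :=
  fun u v => match u, v with
  | inl i, inr j => (i, j) \in EH
  | inr j, inl i => (i, j) \in EH
  | _, _ => false
  end.

Definition sb_connected (a b : nat) (EH : {set 'I_a * 'I_b}) : Prop :=
  forall u v : 'I_a + 'I_b, connect (sb_adj EH) u v.

Definition has_copyb (a b m n : nat) (EH : {set 'I_a * 'I_b})
  (E : {set 'I_m * 'I_n}) : bool :=
  [exists f : {ffun 'I_a -> 'I_m}, exists g : {ffun 'I_b -> 'I_n},
    [&& injectiveb f, injectiveb g &
        [forall i, forall j, ((i, j) \in EH) ==> ((f i, g j) \in E)]]].

Definition zex (a b : nat) (EH : {set 'I_a * 'I_b}) (m n : nat) : nat :=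
  \max_(E : {set 'I_m * 'I_n} | ~~ has_copyb EH E) #|E|.

(* Main.v *)
Require Import Defs.
From mathcomp Require Import all_boot all_order all_algebra.
From mathcomp Require Import zify.
Set Implicit Arguments. Unset Strict Implicit. Unset Printing Implicit Defensive.

Lemma connect_inv (T : finType) (e : rel T) (h : T -> nat) :
  (forall u v, e u v -> h u = h v) -> forall x y, connect e x y -> h x = h y.
Proof.
move=> H x y /connectP [p pth ->]; elim: p x pth => //= z p IH x /andP [exz pz].
by rewrite (H _ _ exz); exact: IH.
Qed.

Lemma blowup a b (EH : {set 'I_a * 'I_b}) k l m n t (E' : {set 'I_k * 'I_l}) :
  sb_connected EH -> ~~ has_copyb EH E' -> t * k <= m -> t * l <= n ->
  t * #|E'| <= zex EH m n.
Proof.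
move=> Hc Hf Hm Hn.
have [/eqP->|] := boolP (#|E'| == 0); first by rewrite muln0.
rewrite -lt0n => /card_gt0P [[r s] _].
case: k r E' Hf Hm => [[]//|k'] r E' Hf Hm.
case: l s E' Hf Hn => [[]//|l'] s E' Hf Hn.
have [->|tpos] := posnP t; first by [].
case: m Hm => [|m'] Hm; first by move: Hm; rewrite leqn0 muln_eq0; case/orP=>/eqP; lia.
case: n Hn => [|n'] Hn; first by move: Hn; rewrite leqn0 muln_eq0; case/orP=>/eqP; lia.
set K := k'.+1 in E' Hf Hm *; set L := l'.+1 in E' Hf Hn *.
pose E := [set p : 'I_m'.+1 * 'I_n'.+1 | (p.1 %/ K == p.2 %/ L) &&
   ((inord (p.1 %% K) : 'I_K, inord (p.2 %% L) : 'I_L) \in E')].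
have Efree : ~~ has_copyb EH E.
  apply: contra Hf => /existsP [f /existsP [g /and3P [/injectiveP fi /injectiveP gi /forallP He]]].
  apply/existsP; exists [ffun i => inord (f i %% K) : 'I_K].
  apply/existsP; exists [ffun j => inord (g j %% L) : 'I_L].
  pose h (u : 'I_a + 'I_b) := match u with inl i => f i %/ K | inr j => g j %/ L end.
  have hinv : forall u v, sb_adj EH u v -> h u = h v.
    case=> [i|j] [i'|j'] //= Hij.
    - by have := implyP (forallP (He i) j') Hij; rewrite inE => /andP [/eqP] .
    - by have := implyP (forallP (He i') j) Hij; rewrite inE => /andP [/eqP] .
  have hc u v : h u = h v by apply: connect_inv hinv _ _ (Hc u v).
  apply/and3P; split.
  - apply/injectiveP => i1 i2; rewrite !ffunE => /(congr1 val) /=.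
    rewrite !inordK ?ltn_pmod // => Hmod; apply: fi; apply: val_inj => /=.
    by rewrite (divn_eq (f i1) K) (divn_eq (f i2) K) Hmod (hc (inl i1) (inl i2) : f i1 %/ K = f i2 %/ K).
  - apply/injectiveP => i1 i2; rewrite !ffunE => /(congr1 val) /=.
    rewrite !inordK ?ltn_pmod // => Hmod; apply: gi; apply: val_inj => /=.
    by rewrite (divn_eq (g i1) L) (divn_eq (g i2) L) Hmod (hc (inr i1) (inr i2) : g i1 %/ L = g i2 %/ L).
  - apply/forallP => i; apply/forallP => j; apply/implyP => Hij.
    have := implyP (forallP (He i) j) Hij; rewrite inE => /andP [_].
    by rewrite !ffunE.
pose phi (x : 'I_t * ('I_K * 'I_L)) : 'I_m'.+1 * 'I_n'.+1 :=
  (inord (x.1 * K + x.2.1), inord (x.1 * L + x.2.2)).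
have bnd1 (c : 'I_t) (r0 : 'I_K) : c * K + r0 < m'.+1.
  have h1 := ltn_ord c; have h2 := ltn_ord r0.
  have : c.+1 * K <= t * K by rewrite leq_mul2r ltn_ord orbT.
  rewrite mulSn; lia.
have bnd2 (c : 'I_t) (r0 : 'I_L) : c * L + r0 < n'.+1.
  have h1 := ltn_ord c; have h2 := ltn_ord r0.
  have : c.+1 * L <= t * L by rewrite leq_mul2r ltn_ord orbT.
  rewrite mulSn; lia.
have phiinj : {in setX setT E' &, injective phi}.
  move=> [c [r1 s1]] [c' [r2 s2]] _ _ [].
  move=> /(congr1 val) /=; rewrite !inordK ?bnd1 // => H1 /(congr1 val) /=.
  rewrite !inordK ?bnd2 //= => H2.
  have := congr1 (divn^~ K) H1; rewrite !divnMDl // !divn_small // !addn0 => ec.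
  have ec' : c = c' by apply: val_inj.
  subst c'.
  have er : r1 = r2 by apply: val_inj => /=; lia.
  have es : s1 = s2 by apply: val_inj => /=; lia.
  by rewrite er es.
have -> : t * #|E'| = #|setX [set: 'I_t] E'| by rewrite cardsX cardsT card_ord.
rewrite -(card_in_imset phiinj).
rewrite /zex; apply: leq_trans (@leq_bigmax_cond _ (fun E0 => ~~ has_copyb EH E0) (fun E0 => #|E0|) E Efree).
apply: subset_leq_card; apply/subsetP => _ /imsetP [[c [r1 s1]] Hx ->].
move: Hx; rewrite inE /= => /andP [_ Hrs].
rewrite inE /= !inordK ?bnd1 ?bnd2 //=.
rewrite !divnMDl // !divn_small // !addn0 eqxx /=.
rewrite !modnMDl !modn_small //.
by rewrite !inord_val.
Qed.
From mathcomp Require Import lra.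
Import Order.TTheory GRing.Theory Num.Theory.
Local Open Scope ring_scope.

Lemma realpart (R : realFieldType) (q M T z : R) :
  0 < q -> 0 < M -> 1 <= T -> M < (T + 1) * (q * M) -> 0 <= z ->
  z <= z * T * (2 * q).
Proof.
move=> qp Mp T1 H z0.
have h1 : 1 < (T + 1) * q.
  by rewrite -(ltr_pM2r Mp) mul1r -mulrA.
have h2 : 1 <= T * (2 * q) by nra.
rewrite -mulrA -{1}[z]mulr1; exact: ler_wpM2l.
Qed.

Theorem lemma4p2 (R : realFieldType) (q1 q2 : R) (m n k l : nat)
  (a b : nat) (EH : {set 'I_a * 'I_b}) :
  0 < q1 -> q1 <= 1 -> 0 < q2 -> q2 <= 1 ->
  q1 * m%:R = k%:R -> q2 * n%:R = l%:R ->
  sb_connected EH ->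
  (zex EH k l)%:R / (2 * Num.max q1 q2) <= (zex EH m n)%:R.
Proof.
move=> q1p q1l q2p q2l Hk Hl Hc.
have Mp : 0 < 2 * Num.max q1 q2 by rewrite mulr_gt0 // lt_max q1p.
have [z0|zpos] := posnP (zex EH k l); first by rewrite z0 mul0r ler0n.
have [A0|] := posnP #|[pred E0 : {set 'I_k * 'I_l} | ~~ has_copyb EH E0]|.
  move: zpos; rewrite /zex big_pred0 //.
  by move=> E0; have := card0_eq A0 E0.
move=> /(eq_bigmax_cond (fun E0 : {set 'I_k * 'I_l} => #|E0|)) [E' HE' Hz].
rewrite -/(zex EH k l) in Hz.
move: (zpos); rewrite Hz => /card_gt0P [[r s] _].
have kp : (0 < k)%N by case: k r {Hk E' HE' Hz zpos} => [[]|].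
have lp : (0 < l)%N by case: l s {Hl E' HE' Hz zpos} => [[]|].
have km : (k <= m)%N.
  by rewrite -(ler_nat R) -Hk -[X in _ <= X]mul1r ler_wpM2r.
have ln : (l <= n)%N.
  by rewrite -(ler_nat R) -Hl -[X in _ <= X]mul1r ler_wpM2r.
pose t := minn (m %/ k) (n %/ l).
have tk : (t * k <= m)%N by apply: leq_trans (leq_divM m k); rewrite leq_mul2r geq_minl orbT.
have tl : (t * l <= n)%N by apply: leq_trans (leq_divM n l); rewrite leq_mul2r geq_minr orbT.
have key := blowup Hc HE' tk tl.
have t1 : (1 <= t)%N by rewrite leq_min !divn_gt0 ?km ?ln.
rewrite ler_pdivrMr //.
apply: (@le_trans _ _ ((zex EH k l)%:R * t%:R * (2 * Num.max q1 q2))).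
- rewrite /t /minn; case: ifP => _.
  + have := ltn_ceil m kp; rewrite -[(m %/ k).+1]addn1 -(ltr_nat R) natrM natrD -Hk => H.
    apply: (le_trans (realpart (T := (m %/ k)%:R) q1p _ _ H _)).
    * by rewrite ltr0n; apply: leq_trans km.
    * by rewrite ler1n divn_gt0.
    * by rewrite ler0n.
    * rewrite -Hz; apply: ler_wpM2l; first by rewrite mulr_ge0 ?ler0n.
      by apply: ler_wpM2l => //; rewrite le_max lexx.
  + have := ltn_ceil n lp; rewrite -[(n %/ l).+1]addn1 -(ltr_nat R) natrM natrD -Hl => H.
    apply: (le_trans (realpart (T := (n %/ l)%:R) q2p _ _ H _)).
    * by rewrite ltr0n; apply: leq_trans ln.
    * by rewrite ler1n divn_gt0.
    * by rewrite ler0n.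
    * rewrite -Hz; apply: ler_wpM2l; first by rewrite mulr_ge0 ?ler0n.
      by apply: ler_wpM2l => //; rewrite le_max lexx orbT.
- rewrite ler_pM2r // -natrM ler_nat mulnC Hz; exact: key.
Qed.
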